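(* Let $G=(V,E,s)$ be a flow graph with dominator tree $D$, let $(x,y)\in E$ with $x$ reachable from $s$, and let $G'$ be obtained from $G$ by deleting $(x,y)$, where $y$ is still reachable from $s$ in $G'$. If a vertex $v$ (reachable in both $G$ and $G'$) is affected by the deletion, i.e., $d'(v)\neq d(v)$, then $d(v)=d(y)$ and there is a path $P$ in $G$ from $y$ to $v$ such that $\mathit{depth}(d(v))<\mathit{depth}(w)$ for all vertices $w$ on $P$.
   Context: A flow graph $G=(V,E,s)$ is a directed graph with start vertex $s$; a vertex is reachable if there is a path from $s$ to it. For reachable vertices, $w$ dominates $v$ if every path from $s$ to $v$ contains $w$. The immediate dominator $d(v)$ of a reachable $v\neq s$ is the proper dominator of $v$ that is dominated by all other proper dominators of $v$. The dominator tree $D$ is the tree on the reachable vertices rooted at $s$ in which the parent of $v\neq s$ is $d(v)$; $\mathit{depth}(w)$ is the depth of $w$ in $D$ (the dominator tree of $G$, before the deletion). $d'(v)$ denotes the immediate dominator of $v$ in $G'$. *)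

(* Defs.v *)
From mathcomp Require Import all_boot.
Set Implicit Arguments. Unset Strict Implicit. Unset Printing Implicit Defensive.

Section FlowGraph.
Variable V : finType.

Definition reachable (e : rel V) (s v : V) : Prop := connect e s v.

Definition dominates (e : rel V) (s w v : V) : Prop :=
  reachable e s v /\
  forall p : seq V, path e s p -> last s p = v -> w \in s :: p.

Definition sdominates (e : rel V) (s w v : V) : Prop :=
  w <> v /\ dominates e s w v.

Definition is_idom (e : rel V) (s v d : V) : Prop :=
  v <> s /\ sdominates e s d v /\
  forall u, sdominates e s u v -> dominates e s u d.

Inductive dtree_depth (e : rel V) (s : V) : V -> nat -> Prop :=
| dtree_depth_root : dtree_depth e s s 0
| dtree_depth_step v d n :
    is_idom e s v d -> dtree_depth e s d n -> dtree_depth e s v n.+1.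

Definition del_edge (e : rel V) (x y : V) : rel V :=
  [rel a b | e a b && ((a, b) != (x, y))].

End FlowGraph.

(* Main.v *)
Require Import Defs.
From mathcomp Require Import all_boot.
From Stdlib Require Import Classical ClassicalEpsilon.
Set Implicit Arguments. Unset Strict Implicit. Unset Printing Implicit Defensive.

Section Aux.
Variable V : finType.
Implicit Types (e : rel V) (a b w : V) (p q : seq V).

Lemma prefixP e a p w : path e a p -> w \in a :: p ->
  exists q, [/\ path e a q, last a q = w, w \notin belast a q,
     {subset a :: q <= a :: p} & {subset belast a q <= belast a p}].
Proof.
elim: p a => [|b p IH] a /=.
  rewrite inE => _ /eqP ->. by exists [::]; split.
move=> /andP[eab pb]. case: (eqVneq w a) => [->|nwa] Hw.
  exists [::]; split => //= z; rewrite inE => /eqP ->; exact: mem_head.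
have Hw' : w \in b :: p by move: Hw; rewrite in_cons (negPf nwa).
have [q [pq lq nq sq bq]] := IH b pb Hw'.
exists (b :: q); split => //=.
- by rewrite eab pq.
- by rewrite in_cons negb_or nwa nq.
- move=> z; rewrite in_cons => /orP[/eqP->|zq]; first exact: mem_head.
  by rewrite in_cons (sq z zq) orbT.
- move=> z; rewrite in_cons => /orP[/eqP->|zq]; first exact: mem_head.
  by rewrite in_cons (bq z zq) orbT.
Qed.

Lemma suffixP e a p w : path e a p -> w \in a :: p ->
  exists r, [/\ path e w r, last w r = last a p, w \notin r & {subset r <= p}].
Proof.
elim: p a => [|b p IH] a /=.
  rewrite inE => _ /eqP ->. by exists [::].
move=> /andP[eab pb] Hw.
case Hb: (w \in b :: p).
  have [r [pr lr nr sr]] := IH b pb Hb.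
  exists r; split => // z /sr zp; by rewrite in_cons zp orbT.
have ewa : w = a by move: Hw; rewrite in_cons Hb orbF => /eqP.
subst w. exists (b :: p); split => //=; by rewrite ?eab ?Hb.
Qed.

Lemma path_del1 e x y a q : path e a q -> x \notin belast a q ->
  path (del_edge e x y) a q.
Proof.
elim: q a => [|b q IH] a //= /andP[eab pq]; rewrite in_cons negb_or => /andP[xa xq].
rewrite /del_edge /= eab (IH b pq xq) andbT /= xpair_eqE.
have -> : (a == x) = false by rewrite eq_sym; apply/negbTE.
by [].
Qed.

Lemma path_del2 e x y a q : path e a q -> y \notin q ->
  path (del_edge e x y) a q.
Proof.
elim: q a => [|b q IH] a //= /andP[eab pq]; rewrite in_cons negb_or => /andP[yb yq].
rewrite /del_edge /= eab (IH b pq yq) andbT /= xpair_eqE.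
have -> : (b == y) = false by rewrite eq_sym; apply/negbTE.
by rewrite andbF.
Qed.

Lemma mem_belast_last a p z : z \in a :: p -> z != last a p -> z \in belast a p.
Proof. by move=> H1 H2; move: H1; rewrite lastI mem_rcons in_cons (negPf H2). Qed.

Variable s : V.

Lemma reachP e w : reachable e s w <-> exists p, path e s p /\ last s p = w.
Proof.
split => [/connectP [p pp ->]|[p [pp <-]]]; first by exists p.
by apply/connectP; exists p.
Qed.

Lemma dom_reach e a b : dominates e s a b -> reachable e s a.
Proof.
case=> /reachP [p [pp lp]] H. have Ha := H p pp lp.
have [q [pq lq _ _ _]] := prefixP pp Ha. apply/reachP; by exists q.
Qed.

Lemma dom_refl e a : reachable e s a -> dominates e s a a.
Proof. move=> Ra; split => // p _ <-; exact: mem_last. Qed.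

Lemma dom_trans e a b c : dominates e s a b -> dominates e s b c -> dominates e s a c.
Proof.
move=> [Rb Hab] [Rc Hbc]; split => // p pp lp.
have Hb := Hbc p pp lp.
have [q [pq lq _ sq _]] := prefixP pp Hb.
exact: sq (Hab q pq lq).
Qed.

Lemma dom_antisym e a b : dominates e s a b -> dominates e s b a -> a = b.
Proof.
move=> [Rb Hab] [Ra Hba].
case/reachP: Rb => p [pp lp].
have bp : b \in s :: p by rewrite -lp mem_last.
have [q [pq lq nq _ _]] := prefixP pp bp.
case: (eqVneq a b) => // nab; exfalso.
have Haq := Hab q pq lq.
have [r [pr lr _ _ br]] := prefixP pq Haq.
have Hbr := Hba r pr lr.
have : b \in belast s r by apply: mem_belast_last => //; rewrite lr eq_sym.
by move/br; rewrite (negPf nq).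
Qed.

Lemma dom_chain e a b w : dominates e s a w -> dominates e s b w ->
  dominates e s a b \/ dominates e s b a.
Proof.
move=> Daw Dbw. have Ra := dom_reach Daw; have Rb := dom_reach Dbw.
case: Daw => Rw Haw; case: Dbw => _ Hbw.
case/reachP: (Rw) => p [pp lp].
have [ra [pra lra nra sra]] := suffixP pp (Haw p pp lp).
case Hb: (b \in a :: ra).
  move: Hb; rewrite in_cons => /orP[/eqP->|Hb]; first by left; exact: dom_refl.
  have bra : b \in a :: ra by rewrite in_cons Hb orbT.
  have [rb [prb lrb nrb srb]] := suffixP pra bra.
  left; split => // P1 pP1 lP1.
  case: (boolP (a \in s :: P1)) => // nA; exfalso.
  have : a \in s :: (P1 ++ rb).
    apply: Haw. by rewrite cat_path pP1 lP1 prb.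
    by rewrite last_cat lP1 lrb lra lp.
  rewrite -cat_cons mem_cat (negPf nA) /= => /srb H.
  by rewrite H in nra.
right; split => // P2 pP2 lP2.
case: (boolP (b \in s :: P2)) => // nB; exfalso.
have : b \in s :: (P2 ++ ra).
  apply: Hbw. by rewrite cat_path pP2 lP2 pra.
  by rewrite last_cat lP2 lra lp.
rewrite -cat_cons mem_cat (negPf nB) /= => H.
by rewrite in_cons H orbT in Hb.
Qed.

Definition pb (P : Prop) : bool := if excluded_middle_informative P then true else false.
Lemma pbP P : reflect P (pb P).
Proof. by rewrite /pb; case: excluded_middle_informative => H; constructor. Qed.

Definition sD e w := [set u | pb (sdominates e s u w)].
Definition cnt e w := #|sD e w|.

Lemma sdom_s e u : ~ sdominates e s u s.
Proof.
case=> nus [_ H]. have := H [::] isT erefl. rewrite inE => /eqP. exact: nus.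
Qed.

Lemma cnt_s e : cnt e s = 0.
Proof.
apply/eqP; rewrite cards_eq0; apply/eqP/setP => u; rewrite inE in_set0.
by case: pbP => // /sdom_s.
Qed.

Lemma sdom_sub e a b : dominates e s a b -> {subset sD e a <= sD e b}.
Proof.
move=> Dab u; rewrite !inE => /pbP [nua Dua]; apply/pbP; split.
  move=> ub; subst u; apply: nua; exact: dom_antisym Dua Dab.
exact: dom_trans Dua Dab.
Qed.

Lemma cnt_lt e a b : sdominates e s a b -> cnt e a < cnt e b.
Proof.
move=> [nab Dab]. rewrite /cnt (cardsD1 a (sD e b)).
have -> : a \in sD e b by rewrite inE; apply/pbP; split.
rewrite add1n ltnS; apply: subset_leq_card; apply/subsetP => u Hu.
rewrite in_setD1 (sdom_sub Dab Hu) andbT.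
apply/eqP => ua; subst u; move: Hu; rewrite inE => /pbP [] //.
Qed.

Lemma s_in_sD e w : reachable e s w -> w != s -> s \in sD e w.
Proof.
move=> Rw nws; rewrite inE; apply/pbP; split.
  by move=> sw; rewrite sw eqxx in nws.
split => // p _ _; exact: mem_head.
Qed.

Lemma depth_cnt e k w : cnt e w = k -> reachable e s w -> dtree_depth e s w k.
Proof.
elim: k w => [|k IH] w Hc Rw.
  case: (eqVneq w s) => [->|nws]; first exact: dtree_depth_root.
  have : 0 < cnt e w by apply/card_gt0P; exists s; exact: s_in_sD.
  by rewrite Hc.
have nws : w != s by apply/eqP => ws; rewrite ws cnt_s in Hc.
have Hs := s_in_sD Rw nws.
case: (@arg_maxnP V s (fun u => u \in sD e w) (cnt e) Hs) => d Hd Hmax.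
have Sdw : sdominates e s d w by move: Hd; rewrite inE => /pbP.
have Rd : reachable e s d := dom_reach Sdw.2.
have Id : is_idom e s w d.
  split; first by move=> ws; rewrite ws eqxx in nws.
  split => // u Suw.
  have Huw : u \in sD e w by rewrite inE; apply/pbP.
  case: (dom_chain Suw.2 Sdw.2) => // Ddu.
  case: (eqVneq u d) => [->|nud]; first exact: dom_refl.
  have := Hmax u Huw.
  have := cnt_lt (conj (fun H => (negP nud) (introT eqP (esym H))) Ddu).
  move=> lt /= ge; move: (leq_trans lt ge); by rewrite ltnn.
have Eq : sD e d = sD e w :\ d.
  apply/setP => u; rewrite in_setD1; case: (eqVneq u d) => [->|nud] /=.
    by rewrite inE; case: pbP => // [[]].
  apply/idP/idP; first by move=> H; apply: (sdom_sub Sdw.2 H).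
  rewrite !inE => /pbP Suw; apply/pbP; split; first by move=> H; rewrite H eqxx in nud.
  exact: Id.2.2.
have Hcd : cnt e d = k.
  move: Hc; rewrite /cnt (cardsD1 d (sD e w)) Hd -Eq add1n.
  by case.
apply: dtree_depth_step Id _. exact: IH.
Qed.

End Aux.

Theorem lemma4 (V : finType) (e : rel V) (s x y v : V) :
  e x y ->
  reachable e s x ->
  reachable (del_edge e x y) s y ->
  reachable e s v ->
  reachable (del_edge e x y) s v ->
  forall dv dv' : V,
    is_idom e s v dv ->
    is_idom (del_edge e x y) s v dv' ->
    dv <> dv' ->
    (exists dy, is_idom e s y dy /\ dv = dy) /\
    (exists p : seq V,
        path e y p /\ last y p = v /\
        exists n, dtree_depth e s dv n /\
          forall w, w \in y :: p -> exists m, dtree_depth e s w m /\ n < m).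
Proof.
move=> exy Rx Ry' Rv Rv' dv dv' [vs [[ndv Ddv] Idv]] [_ [[ndv' Ddv'] Idv']] neq.
set e' := del_edge e x y.
have sub : forall a p, path e' a p -> path e a p.
  move=> a p; apply: sub_path => u w /andP[].
  by [].
have F1 : forall a b, dominates e s a b -> reachable e' s b -> dominates e' s a b.
  move=> a b [_ H] Rb; split => // p pp lp; exact: H p (sub _ _ pp) lp.
have Rsub : forall w, reachable e' s w -> reachable e s w.
  move=> w /reachP [p [pp lp]]; apply/reachP; exists p; split => //; exact: sub.
have D1 : dominates e' s dv dv' := Idv' dv (conj ndv (F1 _ _ Ddv Rv')).
have F3 : ~ dominates e s dv' v.
  move=> Dd'v. have Dd'd := Idv dv' (conj ndv' Dd'v).
  have Rd' : reachable e' s dv := dom_reach D1.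
  apply: neq; exact: dom_antisym D1 (F1 _ _ Dd'd Rd').
have [P0 [pP0 lP0 nP0]] : exists p, [/\ path e s p, last s p = v & dv' \notin s :: p].
  apply: NNPP => H; apply: F3; split => // p pp lp.
  case: (boolP (dv' \in s :: p)) => // Hn; exfalso; apply: H; by exists p.
have nP0' : ~~ path e' s P0.
  apply/negP => pp'. case: Ddv' => _ H. by rewrite (H P0 pp' lP0) in nP0.
have yP0 : y \in P0.
  case: (boolP (y \in P0)) => // ny. by rewrite (path_del2 x pP0 ny) in nP0'.
have xP0 : x \in belast s P0.
  case: (boolP (x \in belast s P0)) => // nx. by rewrite (path_del1 y pP0 nx) in nP0'.
have yP0' : y \in s :: P0 by rewrite in_cons yP0 orbT.
have [Q [pQ lQ nyQ sQ]] := suffixP pP0 yP0'.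
rewrite lP0 in lQ.
have pQ' : path e' y Q := path_del2 x pQ nyQ.
have nd'Q : dv' \notin y :: Q.
  rewrite in_cons negb_or; apply/andP; split.
  - apply/eqP => H; move: nP0; by rewrite H in_cons yP0 orbT.
  - apply/negP => /sQ H; move: nP0; by rewrite in_cons H orbT.
have [X [pX lX nxX sX _]] := prefixP pP0 (mem_belast xP0).
have X' : path e' s X := path_del1 y pX nxX.
have nd'X : dv' \notin s :: X by apply/negP => /sX H; rewrite H in nP0.
have RQ : forall w, w \in y :: Q -> reachable e' s w.
  move=> w Hw. have [q [pq lq _ _ _]] := prefixP pQ' Hw.
  apply: (connect_trans Ry'). apply/connectP; by exists q.
have F7 : forall w, w \in y :: Q -> dominates e' s dv' w.
  move=> w Hw; split; first exact: RQ.
  move=> R pR lR. case: (boolP (dv' \in s :: R)) => // nR; exfalso.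
  have [Qw [pQw lQw _ sQw]] := suffixP pQ' Hw.
  case: Ddv' => _ H.
  have : dv' \in s :: (R ++ Qw).
    apply: H. by rewrite cat_path pR lR pQw. by rewrite last_cat lR lQw lQ.
  rewrite -cat_cons mem_cat (negPf nR) /= => /sQw HQ.
  by move: nd'Q; rewrite in_cons HQ orbT.
have F8 : forall w, w \in y :: Q -> dominates e' s dv w.
  move=> w Hw; exact: dom_trans D1 (F7 w Hw).
have F9 : dv \notin y :: Q.
  apply/negP => H; apply: neq; exact: dom_antisym D1 (F7 _ H).
have F10 : forall w, w \in y :: Q -> dominates e s dv w.
  move=> w Hw; split; first exact: Rsub (RQ w Hw).
  move=> R pR lR. case: (boolP (dv \in s :: R)) => // nR; exfalso.
  case: (boolP (path e' s R)) => [pR'|npR].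
    by move: nR; rewrite ((F8 w Hw).2 R pR' lR).
  have xR : x \in belast s R.
    case: (boolP (x \in belast s R)) => // nx. by rewrite (path_del1 y pR nx) in npR.
  have [Rq [pRx lRx _ sRx _]] := prefixP pR (mem_belast xR).
  case: Ddv => _ H.
  have : dv \in s :: (Rq ++ y :: Q).
    apply: H. by rewrite cat_path pRx lRx /= exy pQ. by rewrite last_cat lRx /= lQ.
  rewrite -cat_cons mem_cat => /orP[/sRx|]; [by rewrite (negPf nR) | by rewrite (negPf F9)].
have Hy : y \in y :: Q := mem_head _ _.
have Sdy : sdominates e s dv y.
  split; last exact: F10 _ Hy. move=> H; move: F9; by rewrite H mem_head.
have ys : y <> s by move=> ys; move: Sdy; rewrite ys => /sdom_s.
have Idy : forall u, sdominates e s u y -> dominates e s u dv.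
  move=> u [nuy Duy].
  have Dux : dominates e s u x.
    split => // R pR lR.
    have : u \in s :: rcons R y.
      apply: Duy.2. by rewrite rcons_path pR lR exy. by rewrite last_rcons.
    rewrite -rcons_cons mem_rcons in_cons => /orP[/eqP/nuy|] //.
  have Du'y : dominates e' s u y := F1 _ _ Duy Ry'.
  case: (dom_chain Du'y (F7 y Hy)) => [Dud'|Dd'u].
  - have Du'v : dominates e' s u v := dom_trans Dud' Ddv'.
    have Duv : dominates e s u v.
      split => // R pR lR.
      case: (boolP (u \in s :: R)) => // nR; exfalso.
      case: (boolP (path e' s R)) => [pR'|npR].
        by move: nR; rewrite (Du'v.2 R pR' lR).
      have xR : x \in belast s R.
        case: (boolP (x \in belast s R)) => // nx. by rewrite (path_del1 y pR nx) in npR.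
      have [Rq [pRx lRx _ sRx _]] := prefixP pR (mem_belast xR).
      move: nR; by rewrite (sRx _ (Dux.2 Rq pRx lRx)).
    apply: Idv; split => // uv. apply: ndv'.
    rewrite uv in Dud'. exact: dom_antisym Ddv' Dud'.
  - exfalso.
    have uX : u \in s :: X := Dux.2 X pX lX.
    have [Xu [pXu lXu _ sXu _]] := prefixP X' uX.
    have := Dd'u.2 Xu pXu lXu. move/sXu. by rewrite (negPf nd'X).
split.
  by exists dv; split => //; split => //; split.
exists Q; split => //; split => //.
exists (cnt s e dv); split.
  apply: depth_cnt => //. exact: dom_reach Ddv.
move=> w Hw; exists (cnt s e w); split.
  apply: depth_cnt => //. exact: (F10 w Hw).1.
apply: cnt_lt. split; last exact: F10.
move=> H; move: F9; by rewrite H Hw.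
Qed.
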